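(* Let $X$ be a Frobenius semiring. (1) $2=4$ in $X$; consequently any $m,n\in\mathbb{N}$ with $m,n\ge2$ and of equal parity are equal in $X$. (2) If $X$ is upper-bound, then $2=3$ in $X$; consequently any $m,n\in\mathbb{N}_{\ge2}$ are equal in $X$.
   Context: A semiring $(X,+,0,\cdot)$: $(X,+,0)$ commutative monoid, $(X,\cdot)$ semigroup, distributivity, $0$ absorbing. A Frobenius semiring is a unital commutative semiring with $(x+y)^n=x^n+y^n$ for all $x,y\in X$, $n\ge1$. A natural number $n$ is identified with $1+\dots+1$ ($n$ times) in $X$. Intrinsic order: $a\le b$ iff $a+x=b$ for some $x$; upper-bound means this preorder is antisymmetric. *)

(* Defs.v *)
From mathcomp Require Import all_boot all_algebra.
Set Implicit Arguments. Unset Strict Implicit. Unset Printing Implicit Defensive.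
Import GRing.Theory.
Local Open Scope ring_scope.

Definition frobenius (X : comPzSemiRingType) : Prop :=
  forall (x y : X) (n : nat), (1 <= n)%N -> (x + y) ^+ n = x ^+ n + y ^+ n.

Definition intrinsic_le (X : comPzSemiRingType) (a b : X) : Prop :=
  exists x : X, a + x = b.

Definition upper_bound (X : comPzSemiRingType) : Prop :=
  forall a b : X, intrinsic_le a b -> intrinsic_le b a -> a = b.

(* Main.v *)
Require Import Defs.
From mathcomp Require Import all_boot all_algebra.
Local Open Scope ring_scope.
From mathcomp Require Import zify.
Import GRing.Theory.

Theorem lemma3p3 (X : comPzSemiRingType) (hX : frobenius X) :
  ((2%:R : X) = 4%:R /\
   forall m n : nat, (2 <= m)%N -> (2 <= n)%N -> odd m = odd n ->
     (m%:R : X) = n%:R) /\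
  (upper_bound X ->
   (2%:R : X) = 3%:R /\
   forall m n : nat, (2 <= m)%N -> (2 <= n)%N -> (m%:R : X) = n%:R).
Proof.
have h24 : (2%:R : X) = 4%:R.
  have := hX 1 1 2 isT.
  rewrite !expr1n expr2.
  have -> : (1 + 1 : X) = 2%:R by rewrite -mulr2n.
  by rewrite -natrM => ->.
have step : forall k, ((k + 2)%N%:R : X) = (k + 4)%N%:R.
  by move=> k; rewrite !natrD h24.
have red : forall k, ((k + 2)%N%:R : X) = ((odd k : nat) + 2)%N%:R.
  elim/ltn_ind=> k IH.
  case: k IH => [|[|j]] IH //.
  have -> : (j.+2 + 2 = j + 4)%N by lia.
  rewrite -step (IH j); last by lia.
  by have -> : odd j.+2 = odd j by rewrite /= negbK.
have gen : forall m n : nat, (2 <= m)%N -> (2 <= n)%N -> odd m = odd n ->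
     (m%:R : X) = n%:R.
  move=> m n hm hn ho.
  rewrite -(subnK hm) -(subnK hn) (red (m - 2)%N) (red (n - 2)%N).
  have e : forall k, odd (k + 2) = odd k by move=> k; rewrite addnS addnS addn0 /= negbK.
  have : odd (m - 2) = odd (n - 2) by rewrite -e -(e (n - 2)%N) !subnK.
  by move=> ->.
split; first by split.
move=> ub.
have h23 : (2%:R : X) = 3%:R.
  apply: ub.
    by exists 1; rewrite -mulrSr.
  by exists 1; rewrite -mulrSr h24.
split => // m n hm hn.
have all2 : forall k, (2 <= k)%N -> (k%:R : X) = 2%:R.
  move=> k hk; case ok: (odd k).
    rewrite h23; apply: gen => //; by rewrite ok.
  by apply: gen => //; rewrite ok.
by rewrite all2 // all2.
Qed.
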